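(* For each $l\in\mathbb N$ there exists a constant $B_l$ such that, for each $j\in\mathbb N$ and all large enough $t$, $$\big|\mathbb E K^{(j)}_t(l)-\mathbb E\mathcal K^{(j)}_{\lfloor t\rfloor}(l)\big|\le B_l;$$ the constant $B_l$ does not depend on $j$.
   Context: Let $(p_k)_{k\in\mathbb N}$ be a probability distribution on $\mathbb N$ with $p_k>0$ for infinitely many $k$. For a word $r=r_1\cdots r_j\in\mathbb N^j$ write $|r|=j$, $p_r:=p_{r_1}\cdots p_{r_j}$; words of length $j$ are the generation-$j$ boxes. Nested Karlin occupancy scheme: balls $1,2,\ldots$ are thrown independently; ball $i$ carries an i.i.d. sequence $\xi_{i,1},\xi_{i,2},\ldots$ with law $(p_k)$ and lies, in generation $j$, in box $\xi_{i,1}\cdots\xi_{i,j}$. $\mathcal K_n^{(j)}(l)$ is the number of generation-$j$ boxes containing at least $l$ of balls $1,\ldots,n$; with $(\pi(t))_{t\ge0}$ a unit-rate Poisson process independent of the balls, $K^{(j)}_t(l):=\mathcal K^{(j)}_{\pi(t)}(l)$. *)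

(* Defs.v *)
From HB Require Import structures.
From mathcomp Require Import all_boot all_order all_algebra.
From mathcomp Require Import all_classical all_reals all_analysis.
Set Implicit Arguments. Unset Strict Implicit. Unset Printing Implicit Defensive.
Import Order.TTheory GRing.Theory Num.Theory.
Local Open Scope ring_scope.
Local Open Scope classical_set_scope.

Definition wordprob {R : realType} (p : nat -> R) (r : seq nat) : R :=
  \prod_(k <- r) p k.

(* P(Bin(n,q) >= l) : the probability that at least l of n independent balls
   fall in a box of probability q *)
Definition bin_tail {R : realType} (n l : nat) (q : R) : R :=
  \sum_(l <= k < n.+1) ('C(n, k))%:R * q ^+ k * (1 - q) ^+ (n - k).

(* E K_n^{(j)}(l) = sum over generation-j boxes r of P(box r holds >= l balls) *)
Definition EKn {R : realType} (p : nat -> R) (j n l : nat) : \bar R :=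
  (\esum_(r in [set r : seq nat | size r = j]) (bin_tail n l (wordprob p r))%:E)%E.

(* E K_t^{(j)}(l) = sum_n P(pi(t) = n) E K_n^{(j)}(l) (conditioning on pi(t)) *)
Definition EKt {R : realType} (p : nat -> R) (j : nat) (t : R) (l : nat) : \bar R :=
  (\sum_(0 <= n <oo) ((expR (- t) * t ^+ n / (n`!)%:R)%:E * EKn p j n l))%E.

(* Main.v *)
Require Import Defs.
From HB Require Import structures.
From mathcomp Require Import all_boot all_order all_algebra.
From mathcomp Require Import all_classical all_reals all_analysis.
From mathcomp Require Import ring lra zify.
Import Order.TTheory GRing.Theory Num.Theory.
Local Open Scope ring_scope.
Local Open Scope classical_set_scope.
Set Implicit Arguments. Unset Strict Implicit. Unset Printing Implicit Defensive.

Section Binom.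
Variable R : realType.
Variable q : R.
Hypothesis q0 : 0 <= q.
Hypothesis q1 : q <= 1.

Definition bb k n : R := ('C(n, k))%:R * q ^+ k * (1 - q) ^+ (n - k).

Lemma bb_ge0 k n : 0 <= bb k n.
Proof. by rewrite /bb !mulr_ge0 // exprn_ge0 // subr_ge0. Qed.

Lemma bb_small k n : (n < k)%N -> bb k n = 0.
Proof. by move=> h; rewrite /bb bin_small // !mul0r. Qed.

Lemma bbS0 n : bb 0 n.+1 = (1 - q) * bb 0 n.
Proof. by rewrite /bb !bin0 !expr0 !mul1r !subn0 exprS. Qed.

Lemma bbSS k n : bb k.+1 n.+1 = (1 - q) * bb k.+1 n + q * bb k n.
Proof.
rewrite /bb binS natrD mulrDl mulrDl subSS; congr (_ + _).
  case: (ltnP n k.+1) => h.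
    by rewrite bin_small // !mul0r mulr0.
  have -> : (n - k = (n - k.+1).+1)%N by rewrite subnSK.
  by rewrite [(1 - q) ^+ _.+1]exprS; ring.
by rewrite exprS; ring.
Qed.

Lemma bb_le1 k n : bb k n <= 1.
Proof.
elim: n k => [|n IH] k.
  case: k => [|k]; first by rewrite /bb bin0 !expr0 !mulr1.
  by rewrite bb_small.
case: k => [|k].
  rewrite bbS0; apply: (le_trans (y := (1 - q) * 1)).
    by rewrite ler_wpM2l // subr_ge0.
  by rewrite mulr1 lerBlDr lerDl.
rewrite bbSS; apply: (le_trans (y := (1 - q) * 1 + q * 1)).
  by apply: lerD; apply: ler_wpM2l => //; rewrite subr_ge0.
by rewrite !mulr1 subrK.
Qed.

Lemma bb_diag k n : n.+1%:R * (q * bb k n) = k.+1%:R * bb k.+1 n.+1.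
Proof.
rewrite /bb subSS.
have := mul_bin_diag n.+1 k => /= /(congr1 (fun x : nat => x%:R : R)).
rewrite !natrM => E.
rewrite [q ^+ k.+1]exprS.
transitivity (n.+1%:R * 'C(n, k)%:R * (q * q ^+ k) * (1 - q) ^+ (n - k)); first by ring.
by rewrite E; ring.
Qed.

Lemma qbb_le k n : q * bb k n <= k.+1%:R / n.+1%:R.
Proof.
rewrite ler_pdivlMr // mulrC bb_diag.
by rewrite -[X in _ <= X]mulr1 ler_wpM2l // bb_le1.
Qed.


Definition TT l N n := \sum_(k < N) (if (l <= k)%N then bb k n else 0).

Lemma tail_TT l n : bin_tail n l q = TT l n.+1 n.
Proof.
rewrite /bin_tail /TT big_geq_mkord big_mkcond /=.
by apply: eq_bigr => i _.
Qed.

Lemma TT_ext l N n : TT l (N + n.+1) n = TT l n.+1 n.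
Proof.
elim: N => [//|N IH].
rewrite addSn /TT big_ord_recr /= -/(TT l (N + n.+1) n) IH.
by rewrite bb_small ?if_same ?addr0 //; lia.
Qed.

Lemma ind_sum c N (f : nat -> R) :
  \sum_(i < N) (if i == c :> nat then f i else 0) = if (c < N)%N then f c else 0.
Proof.
elim: N => [|N IH]; first by rewrite big_ord0.
rewrite big_ord_recr /= IH.
case: eqP => [->|ne]; first by rewrite ltnn ltnS leqnn add0r.
have -> : (c < N.+1)%N = (c == N) || (c < N)%N by rewrite ltnS leq_eqVlt.
rewrite addr0; case: (c =P N) => [E|_] //=.
by exfalso; apply: ne.
Qed.

Lemma tail_rec l n : (1 <= l)%N ->
  bin_tail n.+1 l q = bin_tail n l q + q * bb l.-1 n.
Proof.
move=> l1.
rewrite !tail_TT /TT big_ord_recl /= leqn0 (negbTE (lt0n_neq0 l1)) add0r.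
have E : forall i : 'I_n.+1, (if (l <= bump 0 i)%N then bb (bump 0 i) n.+1 else 0) =
   (1 - q) * (if (l <= i.+1)%N then bb i.+1 n else 0) +
   q * ((if i == l.-1 :> nat then bb i n else 0) + (if (l <= i)%N then bb i n else 0)).
  move=> i; rewrite /bump /= add1n bbSS.
  case: l l1 => // l _ /=; rewrite ltnS.
  by case: (ltngtP l i) => h; rewrite ?mulr0 ?addr0 ?add0r ?mulr0.
rewrite (eq_bigr _ (fun i _ => E i)) big_split /= -!mulr_sumr big_split /=.
rewrite (ind_sum _ _ (fun i => bb i n)).
have -> : \sum_(i < n.+1) (if (l <= i.+1)%N then bb i.+1 n else 0) = TT l n.+1 n.
  rewrite -(TT_ext l 1 n) /TT add1n [RHS]big_ord_recl /=.
  have -> : (l <= 0)%N = false by clear E; case: l l1.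
  by rewrite add0r.
rewrite -/(TT l n.+1 n).
case: ifP => h; first by ring.
rewrite bb_small; first by ring.
by rewrite ltnNge -ltnS h.
Qed.

Lemma tail0 l : (1 <= l)%N -> bin_tail 0 l q = 0.
Proof. by move=> l1; rewrite /bin_tail big_geq // . Qed.


Lemma bb_stepd l n : (1 <= l)%N ->
  `|bb l.-1 n.+1 - bb l.-1 n| <= l%:R / n.+1%:R.
Proof.
move=> l1; case: l l1 => // -[|k] _ /=.
  rewrite bbS0 (_ : (1 - q) * bb 0 n - bb 0 n = - (q * bb 0 n)); last by ring.
  rewrite normrN ger0_norm; last by rewrite mulr_ge0 // bb_ge0.
  by apply: le_trans (qbb_le 0 n) _.
rewrite bbSS (_ : (1 - q) * bb k.+1 n + q * bb k n - bb k.+1 n = q * bb k n - q * bb k.+1 n); last by ring.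
have h1 := qbb_le k n; have h2 := qbb_le k.+1 n.
have g1 : 0 <= q * bb k n by rewrite mulr_ge0 ?bb_ge0.
have g2 : 0 <= q * bb k.+1 n by rewrite mulr_ge0 ?bb_ge0.
have c : k.+1%:R / n.+1%:R <= k.+2%:R / n.+1%:R :> R.
  by rewrite ler_pM2r ?invr_gt0 ?ltr0n // ler_nat.
move: h1 h2 g1 g2 c; set A := k.+1%:R / _; set B := k.+2%:R / _; set X := q * bb k n; set Y := q * bb k.+1 n => h1 h2 g1 g2 c.
by rewrite ler_norml; apply/andP; split; lra.
Qed.

End Binom.

Lemma tele (R : realType) (h : nat -> R) (e : R) lo hi : (lo <= hi)%N ->
  (forall i, (lo <= i)%N -> (i < hi)%N -> `|h i.+1 - h i| <= e) ->
  `|h hi - h lo| <= e * (hi - lo)%:R.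
Proof.
elim: hi => [|hi IH].
  by rewrite leqn0 => /eqP -> _; rewrite subrr normr0 subnn mulr0.
rewrite leq_eqVlt => /orP [/eqP <- _|].
  by rewrite subrr normr0 subnn mulr0.
rewrite ltnS => lohi H.
have e0 : 0 <= e by apply: le_trans (H hi lohi (ltnSn _)).
rewrite (_ : h hi.+1 - h lo = (h hi.+1 - h hi) + (h hi - h lo)); last by ring.
rewrite (le_trans (ler_normD _ _)) // subSn // -natr1 mulrDr mulr1 addrC.
apply: lerD; last exact: H.
by apply: IH => // i h1 h2; apply: H => //; apply: ltnW.
Qed.


Lemma div_anti (R : realType) (c : R) a b : 0 <= c -> (a <= b)%N ->
  c / b.+1%:R <= c / a.+1%:R.
Proof.
move=> c0 ab; apply: ler_wpM2l => //.
by rewrite lef_pV2 ?posrE ?ltr0n // ler_nat ltnS.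
Qed.

Section PB.
Variable R : realType.
Variable q : R.
Hypothesis q0 : 0 <= q.
Hypothesis q1 : q <= 1.
Variable l : nat.
Hypothesis l1 : (1 <= l)%N.

Let g n := bin_tail n l q.
Definition dd n := q * bb q l.-1 n.

Lemma g_rec n : g n.+1 = g n + dd n.
Proof. exact: tail_rec. Qed.

Lemma dd_ge0 n : 0 <= dd n.
Proof. by rewrite /dd mulr_ge0 // bb_ge0. Qed.

Lemma dd_leq n : dd n <= q.
Proof. by rewrite /dd -[X in _ <= X]mulr1 ler_wpM2l // bb_le1. Qed.

Lemma tail_ge0 n : 0 <= bin_tail n l q.
Proof.
elim: n => [|n IH]; first by rewrite tail0.
by rewrite tail_rec // addr_ge0 // -/(dd n) dd_ge0.
Qed.

Lemma tail_le n : bin_tail n l q <= n%:R * q.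
Proof.
elim: n => [|n IH]; first by rewrite tail0 // mul0r.
rewrite tail_rec // -/(dd n) -natr1 mulrDl mul1r; apply: lerD => //; exact: dd_leq.
Qed.

Lemma dd_step n : `|dd n.+1 - dd n| <= q * l%:R / n.+1%:R.
Proof.
rewrite /dd -mulrBr normrM (ger0_norm q0) -mulrA ler_wpM2l //.
exact: bb_stepd.
Qed.

Lemma dd_diff_le i m : (i <= m)%N -> `|dd m - dd i| <= q * l%:R / i.+1%:R * (m - i)%:R.
Proof.
move=> im; apply: tele => // j ij jm.
apply: le_trans (dd_step j) _; apply: div_anti => //.
by rewrite mulr_ge0.
Qed.

Lemma dd_diff_ge i m : (m <= i)%N -> `|dd i - dd m| <= q * l%:R / m.+1%:R * (i - m)%:R.
Proof.
move=> im; apply: tele => // j ij jm.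
apply: le_trans (dd_step j) _; apply: div_anti => //.
by rewrite mulr_ge0.
Qed.


Definition BB (n m : nat) : R :=
  (n%:R - m%:R) ^+ 2 * ((n.+1%:R)^-1 + (m.+1%:R)^-1).

Lemma PB n m :
  `|g n - g m - dd m * (n%:R - m%:R)| <= q * l%:R * BB n m.
Proof.
pose h i := g i - dd m * i%:R.
have hS i : h i.+1 - h i = dd i - dd m.
  rewrite /h g_rec -natr1; ring.
have ql0 : 0 <= q * l%:R by rewrite mulr_ge0.
have i1 : forall k : nat, 0 < k.+1%:R :> R by move=> k; rewrite ltr0n.
case: (leqP n m) => nm.
  have := @tele R h (q * l%:R / n.+1%:R * (m - n)%:R) n m nm.
  have /[swap]/[apply] : forall i, (n <= i)%N -> (i < m)%N ->
      `|h i.+1 - h i| <= q * l%:R / n.+1%:R * (m - n)%:R.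
    move=> i ni im; rewrite hS distrC.
    apply: le_trans (dd_diff_le (ltnW im)) _.
    apply: ler_pM.
    - by rewrite divr_ge0 // ltW.
    - by rewrite ler0n.
    - exact: div_anti.
    - by rewrite ler_nat; lia.
  rewrite distrC (_ : h n - h m = g n - g m - dd m * (n%:R - m%:R)); last first.
    by rewrite /h; ring.
  move=> H; apply: le_trans H _.
  rewrite natrB // /BB.
  rewrite (_ : _ * _ * _ = q * l%:R * ((n%:R - m%:R)^+2 * (n.+1%:R)^-1)); last by ring.
  by rewrite ler_wpM2l // ler_wpM2l ?sqr_ge0 // lerDl invr_ge0 ltW.
have mn := ltnW nm.
have := @tele R h (q * l%:R / m.+1%:R * (n - m)%:R) m n mn.
have /[swap]/[apply] : forall i, (m <= i)%N -> (i < n)%N ->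
    `|h i.+1 - h i| <= q * l%:R / m.+1%:R * (n - m)%:R.
  move=> i ni im; rewrite hS.
  apply: le_trans (dd_diff_ge ni) _.
  apply: ler_pM.
  - by rewrite divr_ge0 // ltW.
  - by rewrite ler0n.
  - by [].
  - by rewrite ler_nat; lia.
rewrite (_ : h n - h m = g n - g m - dd m * (n%:R - m%:R)); last first.
  by rewrite /h; ring.
move=> H; apply: le_trans H _.
rewrite natrB // /BB.
rewrite (_ : _ * _ * _ = q * l%:R * ((n%:R - m%:R)^+2 * (m.+1%:R)^-1)); last by ring.
by rewrite ler_wpM2l // ler_wpM2l ?sqr_ge0 // lerDr invr_ge0 ltW.
Qed.

End PB.


Section Poisson.
Variable R : realType.
Import numFieldNormedType.Exports.

Lemma eq_ser (f g : nat -> \bar R) : (forall n, f n = g n) ->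
  (\sum_(0 <= n <oo) f n = \sum_(0 <= n <oo) g n)%E.
Proof. by move=> e; have -> : f = g by apply/funext. Qed.

Lemma eshift (f : nat -> \bar R) : (forall i, 0 <= f i)%E ->
  (\sum_(0 <= i <oo) f i = f 0%N + \sum_(0 <= i <oo) f i.+1)%E.
Proof.
move=> f0; rewrite (@nneseries_recl _ xpredT) //.
by rewrite -(nneseries_addn 1%N) //; congr (_ + _); apply: eq_ser => n; rewrite addn1.
Qed.

Lemma ser_EFin (f : nat -> R) : cvgn (series f) ->
  (\sum_(0 <= n <oo) (f n)%:E = (limn (series f))%:E)%E.
Proof.
move=> cf; rewrite -EFin_lim //; congr (limn _); apply/funext => N /=.
by rewrite sumEFin.
Qed.

Lemma ser_exp (x : R) : (\sum_(0 <= n <oo) (exp_coeff x n)%:E = (expR x)%:E)%E.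
Proof. by rewrite ser_EFin //; apply: is_cvg_series_exp_coeff. Qed.


Variable t : R.
Hypothesis t0 : (0 < t)%R.

Definition pw n : R := (expR (- t) * t ^+ n / (n`!)%:R)%R.

Lemma pw_ge0 n : (0 <= pw n)%R.
Proof. by rewrite /pw !mulr_ge0 ?expR_ge0 ?exprn_ge0 ?invr_ge0 // ltW. Qed.

Lemma pwS n : (pw n.+1 = t * pw n / n.+1%:R)%R.
Proof.
rewrite /pw factS natrM invfM exprS.
have : (n.+1%:R : R) != 0%R by rewrite pnatr_eq0.
have : ((n`!)%:R : R) != 0%R by rewrite pnatr_eq0 -lt0n fact_gt0.
move=> h1 h2; field.
by apply/andP.
Qed.

Definition Epw (u : nat -> R) := (\sum_(0 <= n <oo) (pw n * u n)%:E)%E.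

Lemma Epw_ext u v : (forall n, u n = v n) -> Epw u = Epw v.
Proof. by move=> e; apply: eq_ser => n; rewrite e. Qed.

Lemma Epw_ge0 (u : nat -> R) : (forall n, 0 <= u n) -> (0 <= Epw u)%E.
Proof.
move=> u0; apply: nneseries_ge0 => n _ _.
by rewrite lee_fin mulr_ge0 // pw_ge0.
Qed.

Lemma EpwD (u v : nat -> R) : (forall n, 0 <= u n) -> (forall n, 0 <= v n) ->
  Epw (fun n => u n + v n) = (Epw u + Epw v)%E.
Proof.
move=> u0 v0; rewrite /Epw -nneseriesD; last 2 first.
- by move=> n _ _; rewrite lee_fin mulr_ge0 // pw_ge0.
- by move=> n _ _; rewrite lee_fin mulr_ge0 // pw_ge0.
by apply: eq_ser => n; rewrite mulrDr EFinD.
Qed.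

Lemma EpwZ (c : R) (u : nat -> R) : (0 <= c) -> (forall n, 0 <= u n) ->
  Epw (fun n => c * u n) = (c%:E * Epw u)%E.
Proof.
move=> c0 u0; rewrite /Epw -nneseriesZl; last first.
  by move=> n _; rewrite lee_fin mulr_ge0 // pw_ge0.
by apply: eq_ser => n; rewrite -EFinM; congr (_%:E); ring.
Qed.

Lemma Epw_shift (u : nat -> R) : (forall n, 0 <= u n) ->
  Epw u = ((expR (- t) * u 0%N)%:E + t%:E * Epw (fun n => (u n.+1 / n.+1%:R)%R))%E.
Proof.
move=> u0; rewrite /Epw eshift; last first.
  by move=> n; rewrite lee_fin mulr_ge0 // pw_ge0.
congr (_ + _).
  by rewrite /pw expr0 fact0 divr1 mulr1.
rewrite -nneseriesZl; last first.
  by move=> n _; rewrite lee_fin mulr_ge0 ?pw_ge0 // divr_ge0.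
apply: eq_ser => n; rewrite -EFinM pwS; congr (_%:E).
have : (n.+1%:R : R) != 0%R by rewrite pnatr_eq0.
by move=> h; field.
Qed.

Lemma Epw1 : Epw (fun=> 1) = 1%E.
Proof.
rewrite /Epw (eq_ser (g := fun n => ((expR (- t))%:E * (exp_coeff t n)%:E)%E)).
  rewrite nneseriesZl; last by move=> n _; rewrite lee_fin exp_coeff_ge0 // ltW.
  by rewrite ser_exp -EFinM mulrC expRxMexpNx_1.
by move=> n; rewrite -EFinM mulr1 /pw /exp_coeff /= mulrA.
Qed.


Lemma fin_sub (x : \bar R) (a b : R) : (x + a%:E = b%:E)%E -> x = (b - a)%:E.
Proof. by case: x => // r /= [<-]; rewrite addrK. Qed.

Lemma Epw_n : Epw (fun n => n%:R) = t%:E.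
Proof.
rewrite Epw_shift //; rewrite mulr0 add0e.
rewrite (Epw_ext (v := fun=> 1%R)) ?Epw1 ?mule1 // => n.
by rewrite divff // pnatr_eq0.
Qed.

Lemma Epw_n2 : Epw (fun n => n%:R ^+ 2) = (t * (t + 1))%:E.
Proof.
rewrite Epw_shift; last by move=> n; rewrite sqr_ge0.
rewrite expr0n mulr0 add0e.
rewrite (Epw_ext (v := fun n => n%:R + 1)%R); last first.
  move=> n; rewrite -natr1.
  have : (n%:R + 1 : R) != 0%R by rewrite natr1 pnatr_eq0.
  by move=> h; field.
by rewrite EpwD // Epw_n Epw1 -EFinD -EFinM.
Qed.

Lemma Epw_inv : Epw (fun n => (n.+1%:R)^-1) = ((1 - expR (- t)) / t)%:E.
Proof.
have := Epw1; rewrite Epw_shift // mulr1.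
rewrite (Epw_ext (v := fun n => (n.+1%:R)^-1)%R); last by move=> n; rewrite div1r.
have Eg : (0 <= Epw (fun n => (n.+1%:R)^-1)%R)%E.
  by apply: Epw_ge0 => n; rewrite invr_ge0.
move: Eg; case: (Epw _) => [r||] //= _; last first.
  by rewrite mulry gtr0_sg // mul1e.
rewrite -EFinM -EFinD => -[E].
congr (_%:E); rewrite -E.
have : t != 0%R by rewrite gt_eqF.
by move=> h; field.
Qed.


Variable m : nat.
Hypothesis m1 : (1 <= m)%N.
Hypothesis tm : m%:R <= t.
Hypothesis tm2 : t < m.+1%:R.

Lemma EpwX : Epw (fun n => (n%:R - m%:R) ^+ 2) = ((t - m%:R) ^+ 2 + t)%:E.
Proof.
have E : Epw (fun n => (n%:R - m%:R) ^+ 2 + (2 * m%:R) * n%:R) =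
         Epw (fun n => n%:R ^+ 2 + m%:R ^+ 2 * 1).
  by apply: Epw_ext => n; ring.
rewrite !EpwD in E; try (by move=> n; rewrite ?sqr_ge0 ?mulr_ge0).
rewrite !EpwZ ?Epw_n ?Epw_n2 ?Epw1 in E; try (by move=> n; rewrite ?sqr_ge0 ?mulr_ge0); try by rewrite ?sqr_ge0 ?mulr_ge0.
rewrite mule1 -EFinM -EFinD in E.
rewrite (fin_sub E); congr (_%:E); ring.
Qed.


Lemma EpwY : Epw (fun n => (n%:R - m%:R) ^+ 2 / n.+1%:R) =
  (t + 1 + m.+1%:R ^+ 2 * ((1 - expR (- t)) / t) - 2 * m.+1%:R)%:E.
Proof.
have E : Epw (fun n => (n%:R - m%:R) ^+ 2 / n.+1%:R + (2 * m.+1%:R) * 1) =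
         Epw (fun n => (n%:R + 1) + m.+1%:R ^+ 2 * (n.+1%:R)^-1).
  apply: Epw_ext => n; rewrite -!natr1.
  have : (n%:R + 1 : R) != 0 by rewrite natr1 pnatr_eq0.
  by move=> h; field.
have g1 : forall n : nat, 0 <= (n%:R - m%:R) ^+ 2 / n.+1%:R :> R.
  by move=> n; rewrite divr_ge0 ?sqr_ge0.
rewrite !EpwD in E; try exact: g1; try (by move=> n; rewrite ?sqr_ge0 ?mulr_ge0 ?addr_ge0 ?invr_ge0).
rewrite !EpwZ ?Epw_n ?Epw1 ?Epw_inv in E; try (by move=> n; rewrite ?sqr_ge0 ?mulr_ge0 ?invr_ge0); try by rewrite ?sqr_ge0 ?mulr_ge0.
rewrite mule1 -!EFinM -!EFinD in E.
by rewrite (fin_sub E).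
Qed.

Lemma EpwB : Epw (fun n => @BB R n m) =
  (t + 1 + m.+1%:R ^+ 2 * ((1 - expR (- t)) / t) - 2 * m.+1%:R
   + (m.+1%:R)^-1 * ((t - m%:R) ^+ 2 + t))%:E.
Proof.
rewrite (Epw_ext (v := fun n => (n%:R - m%:R) ^+ 2 / n.+1%:R + (m.+1%:R)^-1 * (n%:R - m%:R) ^+ 2)); last first.
  by move=> n; rewrite /BB; ring.
rewrite EpwD; last 2 first.
- by move=> n; rewrite divr_ge0 ?sqr_ge0.
- by move=> n; rewrite mulr_ge0 ?sqr_ge0 ?invr_ge0.
rewrite EpwZ ?invr_ge0 //; last by move=> n; rewrite sqr_ge0.
by rewrite EpwY EpwX -EFinM -EFinD.
Qed.

Lemma EpwB_le : (Epw (fun n => @BB R n m) <= 5%:E)%E.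
Proof.
rewrite EpwB lee_fin.
set M := m%:R : R.
have M1 : 1 <= M by rewrite /M ler1n.
have eS : m.+1%:R = M + 1 by rewrite /M natr1.
rewrite eS; have tm3 := tm2; rewrite eS in tm3.
have e0 : 0 < expR (- t) := expR_gt0 _.
have M0 : 0 < M by apply: lt_le_trans M1.
have K1 : (1 - expR (- t)) / t <= M^-1.
  apply: (le_trans (y := t^-1)).
    by rewrite -[X in _ <= X]mul1r ler_wpM2r ?invr_ge0 ?ltW //; lra.
  by rewrite lef_pV2 ?posrE.
have A : (M + 1) ^+ 2 * ((1 - expR (- t)) / t) <= M + 3.
  apply: (le_trans (y := (M + 1) ^+ 2 * M^-1)).
    by rewrite ler_wpM2l ?sqr_ge0.
  rewrite ler_pdivrMr //; nra.
have B : (M + 1)^-1 * ((t - M) ^+ 2 + t) <= 2.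
  rewrite mulrC ler_pdivrMr ?(lt_le_trans ltr01) ?ltr_wpDr //; last by lra.
  have tm4 : M <= t := tm. have T1 : 0 <= t - M by lra.
  have T2 : t - M <= 1 by lra.
  have : (t - M) ^+ 2 <= 1 by rewrite expr2; nra.
  lra.
lra.
Qed.

End Poisson.


Section Esum.
Variable R : realType.
Local Open Scope ereal_scope.

Lemma esumZ_le (T : choiceType) (S : set T) (c : R) (a : T -> \bar R) :
  (0 <= c)%R -> (forall i, 0 <= a i) ->
  \esum_(i in S) (c%:E * a i) <= c%:E * \esum_(i in S) a i.
Proof.
move=> c0 a0; apply: ge_ereal_sup => _ [X XS <-] /=.
rewrite -ge0_mule_fsumr // lee_wpmul2l ?lee_fin //.
by apply: ereal_sup_ubound; exists X.
Qed.

Lemma esumZ (T : choiceType) (S : set T) (c : R) (a : T -> \bar R) :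
  (0 <= c)%R -> (forall i, 0 <= a i) ->
  \esum_(i in S) (c%:E * a i) = c%:E * \esum_(i in S) a i.
Proof.
move=> c0 a0; apply/eqP; rewrite eq_le esumZ_le //=.
case: (eqVneq c 0%R) => [->|cn0].
  by rewrite mul0e esum_ge0 // => i _; rewrite mul0e.
have cp : (0 < c)%R by rewrite lt_def cn0.
rewrite -lee_pdivlMl //.
rewrite (le_trans _ (esumZ_le (T := T) (c := (c^-1)%R) (a := fun i => c%:E * a i) S _ _)) //.
- rewrite le_eqVlt; apply/orP; left; apply/eqP; apply: eq_esum => i _.
  by rewrite muleA -EFinM mulVf ?mul1e.
- by rewrite invr_ge0.
- by move=> i; rewrite mule_ge0.
Qed.


Variable p : nat -> R.
Hypothesis p_ge0 : forall k, (0 <= p k)%R.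
Hypothesis p_sum1 : (\sum_(0 <= k <oo) (p k)%:E)%E = 1%E.

Lemma wp_ge0 r : (0 <= wordprob p r)%R.
Proof. by rewrite /wordprob; apply: prodr_ge0 => k _. Qed.

Lemma wordsum j : \esum_(r in [set r : seq nat | size r = j]) (wordprob p r)%:E <= 1.
Proof.
elim: j => [|j IH].
  have -> : [set r : seq nat | size r = 0%N] = [set [::]].
    by apply/seteqP; split => r /=; [move/size0nil|move->].
  by rewrite esum_set1 /wordprob ?big_nil // lee_fin.
have -> : [set r : seq nat | size r = j.+1] =
    (fun kr : nat * seq nat => kr.1 :: kr.2) @` ([set: nat] `*` [set r : seq nat | size r = j]).
  apply/seteqP; split => r /=.
    case: r => // k r [] h; exists (k, r) => //.
  by move=> [[k r'] [_ /= h] <-] /=; rewrite h.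
rewrite esum_image; last by move=> [k1 r1] [k2 r2] _ _ /= [-> ->].
have -> : [set: nat] `*` [set r : seq nat | size r = j] =
   [set: nat] `*`` (fun=> [set r : seq nat | size r = j]) by [].
rewrite -(esum_esum (a := fun k r => (wordprob p (k :: r))%:E)) /=; last by move=> k r _ _; rewrite lee_fin wp_ge0.
rewrite (eq_esum (b := fun k => (p k)%:E * \esum_(r in [set r : seq nat | size r = j]) (wordprob p r)%:E)); last first.
  move=> k _; rewrite -esumZ //; last by move=> r; rewrite lee_fin wp_ge0.
  by apply: eq_esum => r _; rewrite /wordprob big_cons EFinM.
apply: (le_trans (le_esum (b := fun k => (p k)%:E) _)).
  by move=> k _; rewrite -[X in _ <= X]mule1 lee_wpmul2l // lee_fin.
by rewrite -nneseries_esumT // p_sum1.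
Qed.

Lemma wp_le1 r : (wordprob p r <= 1)%R.
Proof.
rewrite -lee_fin; apply: le_trans (wordsum (size r)).
apply: esum_ge; exists [set r]; last by rewrite fsbig_set1.
by split; [exact: finite_set1|move=> x /= ->].
Qed.

End Esum.


Section Phi.
Variable R : realType.
Variable t : R.
Hypothesis t0 : 0 < t.
Variable W : set (seq nat).

Definition Phi (h : seq nat -> nat -> R) :=
  (\sum_(0 <= n <oo) ((pw t n)%:E * \esum_(r in W) (h r n)%:E))%E.

Lemma PhiD h1 h2 : (forall r n, 0 <= h1 r n) -> (forall r n, 0 <= h2 r n) ->
  Phi (fun r n => h1 r n + h2 r n) = (Phi h1 + Phi h2)%E.
Proof.
move=> g1 g2; rewrite /Phi -nneseriesD; last 2 first.
- by move=> n _ _; rewrite mule_ge0 ?lee_fin ?pw_ge0 // esum_ge0 // => r _; rewrite lee_fin.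
- by move=> n _ _; rewrite mule_ge0 ?lee_fin ?pw_ge0 // esum_ge0 // => r _; rewrite lee_fin.
apply: eq_ser => n; rewrite -ge0_muleDr; last 2 first.
- by rewrite esum_ge0 // => r _; rewrite lee_fin.
- by rewrite esum_ge0 // => r _; rewrite lee_fin.
congr (_ * _)%E; rewrite -esumD; last 2 first.
- by move=> r _; rewrite lee_fin.
- by move=> r _; rewrite lee_fin.
by apply: eq_esum => r _; rewrite EFinD.
Qed.

Lemma PhiM (c : seq nat -> R) (u : nat -> R) (e : R) :
  (forall r, 0 <= c r) -> (forall n, 0 <= u n) ->
  \esum_(r in W) (c r)%:E = e%:E ->
  Phi (fun r n => c r * u n) = (e%:E * Epw t u)%E.
Proof.
move=> c0 u0 ce; rewrite /Epw -nneseriesZl; last first.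
  by move=> n _; rewrite lee_fin mulr_ge0 ?pw_ge0.
apply: eq_ser => n.
rewrite (eq_esum (b := fun r => ((u n)%:E * (c r)%:E)%E)); last first.
  by move=> r _; rewrite -EFinM mulrC.
rewrite esumZ; last 2 first.
- exact: u0.
- by move=> r; rewrite lee_fin.
by rewrite ce -!EFinM; congr (_%:E); ring.
Qed.

Lemma Phi_le h1 h2 : (forall r n, 0 <= h1 r n) -> (forall r n, h1 r n <= h2 r n) ->
  (Phi h1 <= Phi h2)%E.
Proof.
move=> g1 g12; apply: lee_nneseries.
  by move=> n _ _; rewrite mule_ge0 ?lee_fin ?pw_ge0 // esum_ge0 // => r _; rewrite lee_fin.
move=> n _; apply: lee_wpmul2l; first by rewrite lee_fin pw_ge0.
by apply: le_esum => r _; rewrite lee_fin.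
Qed.

End Phi.

Lemma fin_of (R : realType) (x : \bar R) (y : R) : (0 <= x)%E -> (x <= y%:E)%E ->
  exists r : R, x = r%:E /\ 0 <= r <= y.
Proof.
case: x => [r||] //= r0 ry; exists r; split => //.
by rewrite -!lee_fin r0 ry.
Qed.

Unset Implicit Arguments.
Theorem lemma2p12 (R : realType) (p : nat -> R)
  (p_ge0 : forall k, 0 <= p k)
  (p_sum1 : (\sum_(0 <= k <oo) (p k)%:E)%E = 1%E)
  (p_inf : ~ finite_set [set k | 0 < p k]) :
  forall l : nat, (1 <= l)%N ->
  exists B : R, forall j : nat, (1 <= j)%N ->
  exists T : R, forall t : R, T <= t ->
    (`| EKt p j t l - EKn p j (Num.truncn t) l | <= B%:E)%E.
Proof.
move=> l l1; exists (1 + 5 * l%:R) => j _; exists 1 => t t1.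
have t0 : 0 < t by apply: lt_le_trans t1.
set m := Num.truncn t.
have m1 : (1 <= m)%N by rewrite truncn_gt0.
have tm : m%:R <= t by rewrite truncn_le ltW.
have tm2 : t < m.+1%:R by exact: truncnS_gt.
pose W := [set r : seq nat | size r = j].
pose q r := wordprob p r.
have q0 r : 0 <= q r := wp_ge0 p_ge0 r.
have q1 r : q r <= 1 := wp_le1 p_ge0 p_sum1 r.
pose g r n := bin_tail n l (q r).
pose a r := dd (q r) l m.
have g0 r n : 0 <= g r n := tail_ge0 (q0 r) (q1 r) l1 n.
have a0 r : 0 <= a r := dd_ge0 (q0 r) (q1 r) l m.
have a1 r : a r <= q r := dd_leq (q0 r) (q1 r) l m.
have key r n : `|g r n - g r m - a r * (n%:R - m%:R)| <= q r * l%:R * BB R n m :=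
  PB (q0 r) (q1 r) l1 n m.
have BB0 n : 0 <= BB R n m.
  by rewrite /BB mulr_ge0 ?sqr_ge0 // addr_ge0 // invr_ge0.
have lBB0 n : 0 <= l%:R * BB R n m by rewrite mulr_ge0.
have [Qr [EQ /andP[Q0 Q1]]] : exists Qr : R, \esum_(r in W) (q r)%:E = Qr%:E /\ 0 <= Qr <= 1.
  apply: fin_of; last exact: wordsum.
  by apply: esum_ge0 => r _; rewrite lee_fin.
have [Ar [EA /andP[A0 AQ]]] : exists Ar : R, \esum_(r in W) (a r)%:E = Ar%:E /\ 0 <= Ar <= Qr.
  apply: fin_of; first by apply: esum_ge0 => r _; rewrite lee_fin.
  by rewrite -EQ; apply: le_esum => r _; rewrite lee_fin.
have [Gr [EG /andP[G0 _]]] : exists Gr : R, \esum_(r in W) (g r m)%:E = Gr%:E /\ 0 <= Gr <= m%:R * Qr.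
  apply: fin_of; first by apply: esum_ge0 => r _; rewrite lee_fin.
  rewrite EFinM -EQ -esumZ; last 2 first.
  - by rewrite ler0n.
  - by move=> r; rewrite lee_fin.
  apply: le_esum => r _; rewrite -EFinM lee_fin.
  exact: (tail_le (q0 r) (q1 r) l1 m).
have [Mr [EM /andP[M0 M5]]] : exists Mr : R, Epw t (fun n => BB R n m) = Mr%:E /\ 0 <= Mr <= 5.
  apply: fin_of; first by apply: Epw_ge0.
  exact: EpwB_le.
have Epwm : Epw t (fun _ => m%:R) = (m%:R)%:E.
  rewrite (@Epw_ext _ t _ (fun _ => m%:R * 1)); last by move=> n; rewrite mulr1.
  by rewrite EpwZ // Epw1 // mule1.
have EK : EKt p j t l = Phi t W g by [].
have EN : EKn p j m l = Gr%:E by rewrite -EG.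
have E1 : Phi t W (fun r n => a r * m%:R) = (Ar * m%:R)%:E.
  have hu : forall n : nat, 0 <= (fun _ : nat => m%:R : R) n by move=> n; rewrite ler0n.
  by rewrite (PhiM t0 a0 hu EA) Epwm -EFinM.
have E2 : Phi t W (fun r n => g r m * 1) = Gr%:E.
  have hu : forall n : nat, 0 <= (fun _ : nat => 1 : R) n by move=> n; rewrite ler01.
  have hc : forall r, 0 <= (fun r => g r m) r by move=> r; exact: g0.
  by rewrite (PhiM t0 hc hu EG) Epw1 // mule1.
have E3 : Phi t W (fun r n => a r * n%:R) = (Ar * t)%:E.
  have hu : forall n : nat, 0 <= (fun n : nat => n%:R : R) n by move=> n; rewrite ler0n.
  by rewrite (PhiM t0 a0 hu EA) Epw_n // -EFinM.
have E4 : Phi t W (fun r n => q r * (l%:R * BB R n m)) = (Qr * (l%:R * Mr))%:E.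
  have hu : forall n : nat, 0 <= (fun n : nat => l%:R * BB R n m) n by move=> n; exact: lBB0.
  rewrite (PhiM t0 q0 hu EQ).
  by rewrite EpwZ // EM -!EFinM.
have U : (Phi t W (fun r n => (g r n + a r * m%:R)%R) <=
          Phi t W (fun r n => ((g r m * 1 + a r * n%:R) + q r * (l%:R * BB R n m))%R))%E.
  apply: (Phi_le t0) => r n; first by rewrite addr_ge0 // mulr_ge0.
  have := key r n; rewrite mulr1 ler_norml => /andP[k1 k2].
  move: k1 k2; rewrite mulrA; lra.
have D : (Phi t W (fun r n => (g r m * 1 + a r * n%:R)%R) <=
          Phi t W (fun r n => ((g r n + a r * m%:R) + q r * (l%:R * BB R n m))%R))%E.
  apply: (Phi_le t0) => r n.
    by rewrite mulr1 addr_ge0 // mulr_ge0.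
  have := key r n; rewrite mulr1 ler_norml => /andP[k1 k2].
  move: k1 k2; rewrite mulrA; lra.
clearbody g a.
rewrite !(PhiD t0) in U; try (by move=> r n; rewrite ?mulr1; repeat first [exact: g0 | exact: a0 | exact: q0 | exact: BB0 | exact: ler0n | exact: ler01 | apply: addr_ge0 | apply: mulr_ge0]).
rewrite !(PhiD t0) in D; try (by move=> r n; rewrite ?mulr1; repeat first [exact: g0 | exact: a0 | exact: q0 | exact: BB0 | exact: ler0n | exact: ler01 | apply: addr_ge0 | apply: mulr_ge0]).
rewrite E1 E2 E3 E4 -EK in U.
rewrite E1 E2 E3 E4 -EK in D.
have [x [Ex _]] : exists x, EKt p j t l = x%:E /\ 0 <= x <= Gr + Ar * t + Qr * (l%:R * Mr).
  apply: fin_of.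
    rewrite EK /Phi; apply: nneseries_ge0 => n _ _.
    rewrite mule_ge0 ?lee_fin ?pw_ge0 // esum_ge0 // => r _; rewrite lee_fin; exact: g0.
  rewrite !EFinD; apply: le_trans U; rewrite leeDl // lee_fin mulr_ge0 //.
rewrite Ex -!EFinD lee_fin in U.
rewrite Ex -!EFinD lee_fin in D.
rewrite Ex EN -EFinB abse_EFin lee_fin.
have h1 : Ar * (t - m%:R) <= 1.
  have : Ar <= 1 by apply: le_trans AQ Q1.
  have : t - m%:R <= 1 by lra.
  have : 0 <= t - m%:R by lra.
  nra.
have h2 : 0 <= Ar * (t - m%:R) by rewrite mulr_ge0 // subr_ge0.
have h3 : Qr * (l%:R * Mr) <= 5 * l%:R.
  have l0 : 0 <= l%:R :> R by rewrite ler0n.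
  have : Qr * Mr <= 5 by nra.
  nra.
have h4 : 0 <= Qr * (l%:R * Mr) by rewrite !mulr_ge0.
rewrite ler_norml; apply/andP; split; lra.
Qed.
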